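(* Let $\kappa$ be any cardinal, let $d\geq 1$, and let $\kappa_1,\dots,\kappa_d$ be uncountable regular cardinals such that $\kappa_1>\kappa$ and $\kappa_{i+1}>2^{\kappa_i}$ for all $i<d$. Then for every function $f:\kappa_1\times\cdots\times\kappa_d\to\kappa$ there exist stationary sets $\kappa_1'\subseteq\kappa_1,\dots,\kappa_d'\subseteq\kappa_d$ such that $f$ is constant on $\kappa_1'\times\cdots\times\kappa_d'$.
   Context: A subset of a regular uncountable cardinal $\nu$ is stationary if it meets every closed unbounded subset of $\nu$. *)

(* Defs.v *)
(* Stdlib + mathcomp ordinals ('I_d) world.  Cardinals are modelled as
   well-ordered types (initial ordinals); cardinal comparison via injections. *)
From mathcomp Require Export all_boot.
Set Implicit Arguments. Unset Strict Implicit. Unset Printing Implicit Defensive.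

Definition card_le (A B : Type) : Prop := exists f : A -> B, injective f.
Definition card_lt (A B : Type) : Prop := card_le A B /\ ~ card_le B A.

Section WO.
Variables (T : Type) (lt : T -> T -> Prop).

Definition le (x y : T) : Prop := lt x y \/ x = y.

Definition is_well_order : Prop :=
  well_founded lt /\ (forall x y z, lt x y -> lt y z -> lt x z) /\
  (forall x, ~ lt x x) /\ (forall x y, lt x y \/ x = y \/ lt y x).

(* T is (the order type of) a cardinal: an initial ordinal, i.e. every proper
   initial segment has strictly smaller cardinality *)
Definition is_initial : Prop := forall x : T, ~ card_le T {y : T | lt y x}.

Definition unbounded (A : T -> Prop) : Prop :=
  forall x, exists y, A y /\ le x y.

Definition is_lub (S : T -> Prop) (b : T) : Prop :=
  (forall s, S s -> le s b) /\ (forall u, (forall s, S s -> le s u) -> le b u).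

Definition closed (C : T -> Prop) : Prop :=
  forall S : T -> Prop, (exists s, S s) -> (forall s, S s -> C s) ->
  forall b, is_lub S b -> C b.

Definition club (C : T -> Prop) : Prop := closed C /\ unbounded C.

Definition stationary (S : T -> Prop) : Prop :=
  forall C, club C -> exists x, C x /\ S x.

Definition regular : Prop :=
  forall A : T -> Prop, unbounded A -> card_le T {x : T | A x}.

Definition uncountable : Prop := ~ card_le T nat.

Definition uncountable_regular_cardinal : Prop :=
  is_well_order /\ is_initial /\ regular /\ uncountable.
End WO.

(* Main.v *)
Require Import Defs.
From Stdlib Require Import Classical ClassicalEpsilon FunctionalExtensionality PropExtensionality.
From mathcomp Require Import all_boot.
Set Implicit Arguments. Unset Strict Implicit. Unset Printing Implicit Defensive.

Lemma cid' (A : Type) (P : A -> Prop) : (exists x, P x) -> {x | P x}.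
Proof. exact: constructive_indefinite_description. Qed.

Lemma choice_dep (A : Type) (B : A -> Type) (P : forall a, B a -> Prop) :
  (forall a, exists b, P a b) -> exists g : forall a, B a, forall a, P a (g a).
Proof.
move=> H; exists (fun a => proj1_sig (cid' (H a))) => a; exact: proj2_sig (cid' (H a)).
Qed.

Lemma sig_eq (A : Type) (P : A -> Prop) (p q : {x | P x}) :
  proj1_sig p = proj1_sig q -> p = q.
Proof.
case: p q => [x px] [y py] /= e; subst y; f_equal; apply: proof_irrelevance.
Qed.

Lemma wo_min (T : Type) (lt : T -> T -> Prop) : well_founded lt ->
  forall P : T -> Prop, (exists x, P x) -> exists m, P m /\ forall y, P y -> ~ lt y m.
Proof.
move=> wf P [x Px]; elim/(well_founded_ind wf): x Px => x IH Px.
case: (classic (exists y, P y /\ lt y x)) => [[y [Py lyx]]|H]; first exact: IH y lyx Py.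
exists x; split=> // y Py lyx; apply: H; by exists y.
Qed.


Lemma le_trans' (T : Type) (lt : T -> T -> Prop) : is_well_order lt ->
  forall x y z, le lt x y -> le lt y z -> le lt x z.
Proof.
move=> [_ [tr _]] x y z [h1|->] [h2|<-]; rewrite /le; auto.
left; exact: tr h1 h2.
Qed.

Lemma not_lt_le (T : Type) (lt : T -> T -> Prop) : is_well_order lt ->
  forall x y, ~ lt y x -> le lt x y.
Proof.
move=> [_ [_ [_ tri]]] x y h; case: (tri x y) => [l|[e|l]]; rewrite /le; auto.
by case: h.
Qed.

Lemma lub_ex (T : Type) (lt : T -> T -> Prop) : is_well_order lt ->
  forall S, (exists b, forall s, S s -> le lt s b) -> exists b, is_lub lt S b.
Proof.
move=> W S hb; have [wf _] := W.
have [m [Pm Hm]] := wo_min wf hb.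
exists m; split=> // u Hu; apply: not_lt_le => // l; exact: Hm u Hu l.
Qed.

Lemma bounded (T : Type) (lt : T -> T -> Prop) (J : Type) (g : J -> T) :
  is_well_order lt -> regular lt -> ~ card_le T J -> exists b, forall j, lt (g j) b.
Proof.
move=> W reg nc.
case: (classic (unbounded lt (fun y => exists j, g j = y))) => U.
  exfalso; apply: nc; have [h hinj] := reg _ U.
  pose pick (p : {y | exists j, g j = y}) := proj1_sig (cid' (proj2_sig p)).
  have gp : forall p, g (pick p) = proj1_sig p by move=> p; rewrite /pick; case: (cid' _).
  exists (fun t => pick (h t)) => a b e; apply: hinj; apply sig_eq.
  by rewrite -!gp e.
have [x Hx] := not_all_ex_not _ _ U.
exists x => j; have [_ [_ [_ tri]]] := W.
case: (tri (g j) x) => [//|[e|l]]; exfalso; apply: Hx; exists (g j); split; eauto.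
- by right.
- by left.
Qed.

Lemma inter_club (T : Type) (lt : T -> T -> Prop) (J : Type) (C : J -> T -> Prop) :
  uncountable_regular_cardinal lt -> (forall j, club lt (C j)) -> ~ card_le T J ->
  club lt (fun x => forall j, C j x).
Proof.
move=> [W [_ [reg unc]]] cl nc; split.
  move=> S ne sub b lub j; exact: (proj1 (cl j)) S ne (fun s Ss => sub s Ss j) b lub.
move=> x.
have nx : forall j y, {z | C j z /\ le lt y z}.
  move=> j y; apply: cid'; have [z [? ?]] := proj2 (cl j) y; by exists z.
pose nxf j y := proj1_sig (nx j y).
have step : forall y, {b | forall j, lt (nxf j y) b}.
  move=> y; apply: cid'; exact: bounded.
pose sq k := iter k (fun y => proj1_sig (step y)) x.
have sq1 : forall j k, le lt (sq k) (nxf j (sq k)) by move=> j k; exact: proj2 (proj2_sig (nx j (sq k))).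
have sq2 : forall j k, lt (nxf j (sq k)) (sq k.+1) by move=> j k; exact: proj2_sig (step (sq k)) j.
have [b0 hb0] := bounded sq W reg unc.
have [y [ly1 ly2]] := lub_ex W (S := fun z => exists k, sq k = z) (ex_intro _ b0 (fun s '(ex_intro k e) => or_introl (eq_ind _ (fun z => lt z b0) (hb0 k) _ e))).
exists y; split; last by apply: ly1; exists 0.
move=> j; apply: (proj1 (cl j) (fun z => exists k, nxf j (sq k) = z) _ _ y).
- by exists (nxf j (sq 0)), 0.
- move=> s [k <-]; exact: proj1 (proj2_sig (nx j (sq k))).
- split.
    move=> s [k <-]; apply: le_trans' => //; first by left; exact: sq2.
    by apply: ly1; exists k.+1.
  move=> u hu; apply: ly2 => s [k <-]; apply: (le_trans' W (sq1 j k)).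
  by apply: hu; exists k.
Qed.

Lemma stat_ne (T : Type) (lt : T -> T -> Prop) S : stationary lt S -> exists x, S x.
Proof.
move=> st; have [x [_ Sx]] := st (fun _ => True) (conj (fun _ _ _ _ _ => I) (fun x => ex_intro _ x (conj I (or_intror erefl)))).
by exists x.
Qed.

Lemma full_stat (T : Type) (lt : T -> T -> Prop) :
  uncountable_regular_cardinal lt -> stationary lt (fun _ => True).
Proof.
move=> [_ [_ [_ unc]]] C [_ U].
case: (classic (inhabited T)) => [[t]|H].
  have [y [Cy _]] := U t; by exists y.
exfalso; apply: unc; exists (fun _ => 0) => a; exfalso; apply: H; exact: inhabits a.
Qed.

Lemma pigeon (T : Type) (lt : T -> T -> Prop) (J : Type) (S : T -> Prop) (h : T -> J) :
  uncountable_regular_cardinal lt -> stationary lt S -> ~ card_le T J ->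
  exists j, stationary lt (fun x => S x /\ h x = j).
Proof.
move=> U st nc; apply: NNPP => H.
have H' : forall j, exists C, club lt C /\ forall x, C x -> ~ (S x /\ h x = j).
  move=> j; have := not_ex_all_not _ _ H j => /not_all_ex_not [C HC].
  have [cC nx] := imply_to_and _ _ HC.
  exists C; split=> // x Cx hx; apply: nx; by exists x.
have [Cf HC] := choice_dep H'.
have [x [Dx Sx]] := st _ (inter_club U (fun j => proj1 (HC j)) nc).
exact: (proj2 (HC (h x))) x (Dx (h x)) (conj Sx erefl).
Qed.

Lemma card_le_trans A B C : card_le A B -> card_le B C -> card_le A C.
Proof. move=> [f hf] [g hg]; exists (fun a => g (f a)) => a b /hg /hf. done. Qed.

Lemma card_le_pow A : card_le A (A -> Prop).
Proof. exists (fun a b => a = b) => a b /(congr1 (fun P => P b)) ->. done. Qed.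

Lemma card_le_pb A : card_le (A -> Prop) (A -> bool).
Proof.
exists (fun P a => if excluded_middle_informative (P a) then true else false).
move=> P Q e; apply: functional_extensionality => a.
have := congr1 (fun h => h a) e => /=.
case: excluded_middle_informative; case: excluded_middle_informative => // p q _;
  apply: propositional_extensionality; tauto.
Qed.

Definition dec_last n (i : 'I_n.+1) : {k : 'I_n | nat_of_ord k = nat_of_ord i} + {n = nat_of_ord i}.
Proof.
case: (ltnP i n) => h; first by left; exists (Ordinal h).
right; apply/eqP; rewrite eqn_leq h -ltnS ltn_ord. done.
Defined.

Definition extF (F : nat -> Type) n (y : forall i : 'I_n, F i) (b : F n) (i : 'I_n.+1) : F i :=
  match dec_last i with
  | inleft (exist k e) => eq_rect _ F (y k) _ e
  | inright e => eq_rect _ F b _ e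
  end.

Lemma extF_lt (F : nat -> Type) n (y : forall i : 'I_n, F i) (b : F n) (j : 'I_n) :
  extF y b (widen_ord (leqnSn n) j) = y j.
Proof.
rewrite /extF; case: (dec_last _) => [[k e]|e].
  case: j e => j hj /=; case: k => k hk /= e; subst k.
  by rewrite (bool_irrelevance hk hj).
exfalso; move: e => /= e; move: (ltn_ord j); by rewrite -e ltnn.
Qed.

Lemma extF_max (F : nat -> Type) n (y : forall i : 'I_n, F i) (b : F n) :
  extF y b ord_max = b.
Proof.
rewrite /extF; case: (dec_last _) => [[k e]|e].
  exfalso; move: e => /= e; move: (ltn_ord k); by rewrite e ltnn.
move: e => /= e; by rewrite (eq_axiomK e).
Qed.

Lemma extF_dec (F : nat -> Type) n (x : forall i : 'I_n.+1, F i) :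
  x = extF (fun j => x (widen_ord (leqnSn n) j)) (x ord_max).
Proof.
apply: functional_extensionality_dep => i; rewrite /extF.
case: (dec_last _) => [[k e]|e].
  case: i e => i hi; case: k => k hk /= e; subst i => /=.
  rewrite /widen_ord; move: (widen_ord_proof _ _) => p; by rewrite (bool_irrelevance p hi).
case: i e => i hi /= e; subst i => /=.
rewrite /ord_max; move: (ltnSn n) => p; by rewrite (bool_irrelevance p hi).
Qed.

Lemma split_last n (i : 'I_n.+1) :
  (exists j : 'I_n, i = widen_ord (leqnSn n) j) \/ i = ord_max.
Proof.
case: (ltnP i n) => h; first by left; exists (Ordinal h); apply: val_inj.
right; apply: val_inj => /=; apply/eqP; rewrite eqn_leq h -ltnS ltn_ord. done.
Qed.

Lemma gen (T : nat -> Type) (lt : forall i, T i -> T i -> Prop) n :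
  (forall i, i < n -> uncountable_regular_cardinal (lt i)) ->
  (forall i j, i < j -> j < n -> ~ card_le (T j) (T i -> Prop)) ->
  forall K : Type, (forall i, i < n -> ~ card_le (T i) K) ->
  forall f : (forall i : 'I_n, T i) -> K,
  exists S : forall i : 'I_n, T i -> Prop,
    (forall i : 'I_n, stationary (lt i) (S i)) /\
    exists c : K, forall x, (forall i : 'I_n, S i (x i)) -> f x = c.
Proof.
elim: n => [|n IH] hreg hpow K hK f.
  have x0 : forall i : 'I_0, T i by move=> [m hm]; exfalso; move: hm; rewrite ltn0.
  exists (fun i _ => True); split.
    by move=> [m hm]; exfalso; move: hm; rewrite ltn0.
  exists (f x0) => x _; congr f; apply: functional_extensionality_dep => -[m hm].
  by exfalso; move: hm; rewrite ltn0.
have U := hreg n (ltnSn n).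
have IHb : forall b : T n, exists S : forall i : 'I_n, T i -> Prop,
    (forall i : 'I_n, stationary (lt i) (S i)) /\
    exists c : K, forall y, (forall i : 'I_n, S i (y i)) -> f (extF y b) = c.
  move=> b; apply: IH.
  - move=> i hi; apply: hreg; exact: ltnW.
  - move=> i j hij hj; apply: hpow => //; exact: ltnW.
  - move=> i hi; apply: hK; exact: ltnW.
have [Sb HSb] := choice_dep IHb.
have [cb Hcb] := choice_dep (fun b => proj2 (HSb b)).
have [c st1] := pigeon cb U (full_stat U) (hK n (ltnSn n)).
have iterm : forall m, m <= n -> exists S' : T n -> Prop, stationary (lt n) S' /\
    (forall b, S' b -> cb b = c) /\
    forall i : 'I_n, i < m -> forall b b', S' b -> S' b' -> Sb b i = Sb b' i.
  elim=> [_|m IHm hm].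
    exists (fun x => True /\ cb x = c); split=> //; split=> //; by move=> b [].
  have [S' [st [hc hs]]] := IHm (ltnW hm).
  pose i := Ordinal hm.
  have [j stj] := pigeon (fun b => Sb b i) U st (hpow m n hm (ltnSn n)).
  exists (fun b => S' b /\ Sb b i = j); split=> //; split; first by move=> b [/hc].
  move=> i' hi' b b' [Sb1 e1] [Sb2 e2].
  move: hi'; rewrite ltnS leq_eqVlt => /orP [/eqP e|l]; last exact: hs.
  have -> : i' = i by apply: val_inj.
  by rewrite e1 e2.
have [S' [st [hc hs]]] := iterm n (leqnn n).
have [b0 Sb0] := stat_ne st.
exists (@extF (fun i => T i -> Prop) n (fun j => Sb b0 j) S'); split.
  move=> i; case: (split_last i) => [[j ->]|->].
    rewrite extF_lt; exact: (proj1 (HSb b0)) j.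
  by rewrite extF_max.
exists c => x Hx; rewrite (extF_dec x).
have Sb1 : S' (x ord_max) by have := Hx ord_max; rewrite extF_max.
rewrite -(hc _ Sb1); apply: Hcb => j.
rewrite (hs j (ltn_ord j) _ b0 Sb1 Sb0).
by have := Hx (widen_ord (leqnSn n) j); rewrite extF_lt.
Qed.

Theorem mainTheorem3 (K : Type) (d : nat) (T : nat -> Type)
  (lt : forall i : nat, T i -> T i -> Prop)
  (hd : 0 < d)
  (hreg : forall i : nat, i < d -> uncountable_regular_cardinal (lt i))
  (hK : card_lt K (T 0))
  (hexp : forall i : nat, i.+1 < d -> card_lt (T i -> bool) (T i.+1))
  (f : (forall i : 'I_d, T i) -> K) :
  exists S : forall i : 'I_d, T i -> Prop,
    (forall i : 'I_d, stationary (lt i) (S i)) /\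
    exists c : K, forall x : forall i : 'I_d, T i,
      (forall i : 'I_d, S i (x i)) -> f x = c.
Proof.
have step : forall i, i.+1 < d -> card_le (T i) (T i.+1).
  move=> i hi; apply: card_le_trans (card_le_pow _) _.
  apply: card_le_trans (card_le_pb _) _; exact: proj1 (hexp i hi).
have chain : forall k i, i + k < d -> card_le (T i) (T (i + k)).
  elim=> [|k IHk] i hik; first by rewrite addn0; exists id.
  apply: card_le_trans (IHk i _) _; first by apply: leq_ltn_trans _ hik; rewrite leq_add2l.
  rewrite addnS; apply: step; by rewrite -addnS.
apply: gen => //.
- move=> i j hij hj hc; apply: (proj2 (hexp i (leq_ltn_trans hij hj))).
  apply: card_le_trans (card_le_pb _).
  apply: card_le_trans hc.
  have := chain (j - i.+1) i.+1; rewrite subnKC //; apply; done.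
- move=> i hi hc; apply: (proj2 hK); apply: card_le_trans hc.
  by have := chain i 0; rewrite add0n; apply.
Qed.
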